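(* Let $g,m,\ell$ be integers greater than $1$ with $g$ and $m$ odd, $\ell$ even, $m>\ell$, $\gcd(g+1,\ell)=2$ and $\gcd(m,\ell)=1$. Let $n=mg$ and $k=1+\ell g$, and let $A$ be a cyclically $k$-diagonal $n\times n$ array. Then there exists a solution to $P(A)$.
   Context: Arrays are partially filled and toroidal; $F(A)$ is the set of filled cells. $s_R(i,j)=(i,j+t)$, $s_C(i,j)=(i+t,j)$ with $t\ge1$ minimal such that the cell is filled. For $R,C\in\{-1,1\}^n$, $CN_{RC}(i,j)=s_C^{c_{j'}}(i,j')$ where $(i,j')=s_R^{r_i}(i,j)$. A solution to $P(A)$ is a pair $R,C$ such that $CN_{RC}$ is a permutation of $F(A)$ forming a single cycle of length $|F(A)|$. An $n\times n$ array is cyclically $k$-diagonal if its filled cells are exactly the $(i,j)$ with $i-j\bmod n\in\{0,\dots,k-1\}$. *)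

(* Defs.v *)
From mathcomp Require Import all_boot all_order all_algebra.
Set Implicit Arguments. Unset Strict Implicit. Unset Printing Implicit Defensive.
Import GRing.Theory Num.Theory.

(* Toroidal n x n arrays: a cell is a pair (row, column) in 'I_n * 'I_n.
   A partially filled array is represented by its set of filled cells F(A). *)

Section Arrays.
Variable n : nat.
Notation cell := ('I_n * 'I_n)%type.

Lemma ord_pos (j : 'I_n) : 0 < n.
Proof. exact: leq_ltn_trans (leq0n j) (ltn_ord j). Qed.

Definition addmod (j : 'I_n) (t : nat) : 'I_n :=
  Ordinal (ltn_pmod (j + t) (ord_pos j)).
Definition submod (j : 'I_n) (t : nat) : 'I_n := addmod j (n - t %% n).

Definition first_filled (F : {set cell}) (mv : nat -> cell) (x : cell) : cell :=
  let t := find (fun t => mv t.+1 \in F) (iota 0 n) in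
  if t < n then mv t.+1 else x.

Definition sR F (x : cell) := first_filled F (fun t => (x.1, addmod x.2 t)) x.
Definition sRinv F (x : cell) := first_filled F (fun t => (x.1, submod x.2 t)) x.
Definition sC F (x : cell) := first_filled F (fun t => (addmod x.1 t, x.2)) x.
Definition sCinv F (x : cell) := first_filled F (fun t => (submod x.1 t, x.2)) x.

Definition sRpow F (r : int) x :=
  if r == 1%R then sR F x else if r == (-1)%R then sRinv F x else x.
Definition sCpow F (c : int) x :=
  if c == 1%R then sC F x else if c == (-1)%R then sCinv F x else x.

Definition CN F (R C : 'I_n -> int) (x : cell) : cell :=
  let y := sRpow F (R x.1) x in sCpow F (C y.2) y.

(* (R, C) is a solution to P(A): R, C in {-1,1}^n and CN_{RC} is a
   permutation of F(A) forming a single cycle of length |F(A)| *)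
Definition is_solution (F : {set cell}) (R C : 'I_n -> int) : Prop :=
  (forall i, R i = 1%R \/ R i = (-1)%R) /\
  (forall j, C j = 1%R \/ C j = (-1)%R) /\
  {in F, forall x, CN F R C x \in F} /\
  {in F &, injective (CN F R C)} /\
  exists2 x0, x0 \in F &
    forall y, y \in F -> exists t, iter t (CN F R C) x0 = y.

Definition cyc_kdiag (k : nat) : {set cell} :=
  [set x : cell | (x.1 + n - x.2) %% n < k].

End Arrays.

(* Main.v *)
Require Import Defs.
From mathcomp Require Import all_boot all_order all_algebra.
Import GRing.Theory Num.Theory.
From mathcomp Require Import zify.
Set Implicit Arguments. Unset Strict Implicit. Unset Printing Implicit Defensive.

Lemma modMD M c X r : r < c -> (X * c + r) %% (M * c) = (X %% M) * c + r.
Proof.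
move=> rc; have c0 : 0 < c by lia.
case: M => [|M]; first by rewrite mul0n modn0 modn0.
rewrite {1}(divn_eq X M.+1) mulnDl -mulnA -addnA modnMDl modn_small //.
have := ltn_pmod X (ltn0Sn M); nia.
Qed.

Lemma tr_inj M mu q s1 s2 : coprime M mu -> s1 < M -> s2 < M ->
  (q + s1 * mu) %% M = (q + s2 * mu) %% M -> s1 = s2.
Proof.
move=> co.
wlog le12 : s1 s2 / s1 <= s2.
  move=> W h1 h2 e; case: (leqP s1 s2) => h; first exact: W.
  by symmetry; apply: W => //; first exact: ltnW.
move=> _ h2 /eqP e; move: e; rewrite eq_sym eqn_modDl eqn_mod_dvd ?leq_mul2r ?le12 ?orbT //.
rewrite -mulnBl Gauss_dvdl //.
case: (posnP (s2 - s1)) => [|p]; first lia.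
move=> /dvdn_leq => /(_ p); lia.
Qed.

Lemma tr_surj M mu q q' : coprime M mu -> q' < M ->
  exists2 s, s < M & (q + s * mu) %% M = q'.
Proof.
move=> co qM.
have M0 : 0 < M by lia.
pose f (s : 'I_M) : 'I_M := Ordinal (ltn_pmod (q + s * mu) M0).
have fi : injective f.
  move=> a b /(congr1 val) /= e; apply: val_inj; exact: tr_inj co (ltn_ord a) (ltn_ord b) e.
have := inj_card_onto fi (leqnn _) (Ordinal qM).
case/codomP => s /(congr1 val) /= e.
by exists s.
Qed.

Lemma ff_gen (P : nat -> bool) (nn t : nat) :
  t < nn -> P t -> (forall s, s < t -> ~~ P s) -> find P (iota 0 nn) = t.
Proof.
move=> tn Pt before.
have hs : has P (iota 0 nn) by apply/hasP; exists t => //; rewrite mem_iota.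
have := nth_find 0 hs; rewrite has_find size_iota in hs.
rewrite nth_iota // add0n => Pf.
case: (ltngtP (find P (iota 0 nn)) t) => // h.
  by move: (before _ h); rewrite Pf.
have := before_find 0 h; rewrite nth_iota // add0n Pt //.
Qed.


Section Abs.
Variables g m l : nat.
Hypotheses (Hg : 1 < g) (Hm : 1 < m) (Hl : 1 < l) (Hgo : odd g) (Hmo : odd m)
  (Hle : ~~ odd l) (Hlm : l < m) (Hgl : gcdn g.+1 l = 2) (Hml : gcdn m l = 1).
Local Notation n := (m * g).
Local Notation k := (1 + l * g).

Lemma kn : k < n. Proof. nia. Qed.
Lemma gk : g.+2 < k. Proof. nia. Qed.
Lemma npos : 0 < n. Proof. nia. Qed.

Definition nxt N := if N.+1 == k then 0 else N.+1.

Definition step (p : nat * nat) : nat * nat :=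
  let: (j, N) := p in
  if N == 0 then
    let j' := (j + (n - l * g)) %% n in (j', if j' <= g then 1 else 0)
  else
    let j' := j.+1 %% n in (j', if j' <= g then nxt N else N).

Definition leads p q := exists t, iter t step p = q.

Lemma leads_refl p : leads p p. Proof. by exists 0. Qed.
Lemma leads_trans p q r : leads p q -> leads q r -> leads p r.
Proof. by move=> [t1 <-] [t2 <-]; exists (t2 + t1); rewrite iterD. Qed.
Lemma leads_step p q : step p = q -> leads p q.
Proof. by move=> <-; exists 1. Qed.
Lemma leads_stepr p q r : leads p q -> step q = r -> leads p r.
Proof. move=> h1 h2; exact: (leads_trans h1 (leads_step h2)). Qed.

Lemma B1 j N : g <= j -> j.+1 < n -> N != 0 -> step (j, N) = (j.+1, N).
Proof.
move=> h1 h2 h3; rewrite /step (negbTE h3) modn_small //.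
by rewrite leqNgt ltnS h1.
Qed.

Lemma B2 N : N != 0 -> step (n.-1, N) = (0, nxt N).
Proof.
move=> h; rewrite /step (negbTE h) prednK ?npos // modnn //.
Qed.

Lemma B3 j N : j < g -> N != 0 -> step (j, N) = (j.+1, nxt N).
Proof.
move=> h1 h3; rewrite /step (negbTE h3) modn_small ?h1 //.
have := kn; lia.
Qed.

Lemma B4 j N d : N != 0 -> g <= j -> j + d < n -> leads (j, N) (j + d, N).
Proof.
move=> hN hj; elim: d => [|d IH] hd; first by rewrite addn0; apply: leads_refl.
apply: leads_stepr (IH _) _; first lia.
by rewrite B1 ?addnS //; lia.
Qed.

Lemma B5 c N : c <= g -> N != 0 -> leads (c, N) (c.+1 %% g.+1, nxt N).
Proof.
move=> hc hN; case: (ltngtP c g) hc => // h _.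
  by apply: leads_step; rewrite B3 // modn_small.
subst c; rewrite modnn.
apply: leads_stepr (B4 (d := n.-1 - g) hN (leqnn g) _) _.
  have := kn; lia.
have -> : g + (n.-1 - g) = n.-1 by have := kn; lia.
exact: B2.
Qed.

Lemma modS1 x M : (x %% M).+1 %% M = x.+1 %% M.
Proof. by rewrite -[(x %% M).+1]addn1 modnDml addn1. Qed.

Lemma B6 a s : a <= g -> 1 + s < k -> leads (a, 1) ((a + s) %% g.+1, 1 + s).
Proof.
move=> ha; elim: s => [|s IH] hs.
  by rewrite addn0 modn_small //; apply: leads_refl.
have hs' : 1 + s < k by apply: leq_trans hs; rewrite addnS.
apply: leads_trans (IH hs') _.
have hc : (a + s) %% g.+1 <= g by rewrite -ltnS ltn_pmod.
have hN : 1 + s != 0 by [].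
have := B5 hc hN.
rewrite modS1 /nxt.
have -> : (1 + s).+1 == k = false by apply/negbTE; rewrite neq_ltn hs.
by rewrite addnS.
Qed.
Definition tau a := (a + l * g) %% g.+1.

Lemma B7 a : a <= g -> leads (a, 1) (tau a, 0).
Proof.
move=> ha; apply: leads_trans (B6 (s := k - 2) ha _) _.
  have := gk; lia.
have := B5 (c := (a + (k - 2)) %% g.+1) (N := 1 + (k - 2)).
rewrite -ltnS ltn_pmod // => /(_ isT).
have -> : 1 + (k - 2) = l * g by have := gk; lia.
have lg0 : l * g != 0 by have := gk; lia.
move=> /(_ lg0); rewrite modS1 /nxt /tau.
have -> : (l * g).+1 == k by rewrite add1n.
by have -> : (a + (k - 2)).+1 = a + l * g by have := gk; lia.
Qed.

Definition sigma j := (j + (n - l * g)) %% n.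

Lemma B9 j : g < sigma j -> leads (j, 0) (sigma j, 0).
Proof. by move=> h; apply: leads_step; rewrite /step /= -/(sigma j) leqNgt h. Qed.

Lemma B9b j : sigma j <= g -> leads (j, 0) (tau (sigma j), 0).
Proof.
move=> h; apply: leads_trans (B7 h).
by apply: leads_step; rewrite /step /= -/(sigma j) h.
Qed.

Definition lam := m - l.

Lemma co_lam : coprime m lam.
Proof.
rewrite /coprime /lam; set d := gcdn m (m - l).
have h1 : d %| m := dvdn_gcdl _ _.
have h2 : d %| m - l := dvdn_gcdr _ _.
have := dvdn_sub h1 h2; rewrite subKn ?(ltnW Hlm) // => h3.
have : d %| gcdn m l by rewrite dvdn_gcd h1 h3.
by rewrite Hml dvdn1.
Qed.

Lemma sigma_qr Q r : r < g -> sigma (Q * g + r) = ((Q + lam) %% m) * g + r.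
Proof.
move=> hr; rewrite /sigma /lam -mulnBl.
have -> : Q * g + r + (m - l) * g = (Q + (m - l)) * g + r by rewrite mulnDl; lia.
exact: modMD.
Qed.

Lemma sigma_iter Q r s : Q < m -> r < g ->
  iter s sigma (Q * g + r) = ((Q + s * lam) %% m) * g + r.
Proof.
move=> hQ hr; elim: s => [|s IH]; first by rewrite mul0n addn0 modn_small.
rewrite iterS IH sigma_qr // modnDml mulSn; congr (_ * _ + _); congr (_ %% _); lia.
Qed.

Lemma u_ex : exists u, [/\ 0 < u, u < m & (u * lam) %% m = 1].
Proof.
have [s hs e] := tr_surj 0 co_lam Hm.
exists s; split => //; move: e; rewrite add0n.
by case: s hs => // _; rewrite mul0n mod0n.
Qed.

Lemma hit b H : 0 < H -> (forall s, 0 < s -> s < H -> g < iter s sigma b) ->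
  iter H sigma b <= g ->
  (forall s, s < H -> leads (b, 0) (iter s sigma b, 0)) /\
  leads (b, 0) (tau (iter H sigma b), 0).
Proof.
move=> H0 hout hin.
have A : forall s, s < H -> leads (b, 0) (iter s sigma b, 0).
  elim=> [|s IH] hs; first exact: leads_refl.
  apply: leads_trans (IH (ltnW hs)) _.
  rewrite iterS; apply: B9; rewrite -iterS; exact: hout.
split => //.
case: H H0 hout hin A => // H _ hout hin A.
apply: leads_trans (A H (ltnSn H)) _.
rewrite iterS; apply: B9b; by rewrite -iterS.
Qed.

Lemma Hr r : 0 < r -> r < g ->
  (forall s, s < m -> leads (r, 0) (iter s sigma r, 0)) /\ leads (r, 0) (tau r, 0).
Proof.
move=> r0 rg.
have E s : iter s sigma r = ((0 + s * lam) %% m) * g + r.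
  by have := sigma_iter s (Q := 0) (ltnW Hm) rg; rewrite mul0n add0n.
have [] := hit (b := r) (H := m) (ltnW Hm).
- move=> s s0 sm; rewrite E.
  have : (0 + s * lam) %% m != 0.
    apply/eqP => e; have := tr_inj (q := 0) co_lam sm (ltnW Hm) (s2 := 0).
    by rewrite mul0n addn0 mod0n => /(_ e) ?; subst s.
  generalize ((0 + s * lam) %% m) => x; case: x => // x _; nia.
- by rewrite E add0n modnMr mul0n add0n ltnW.
by move=> A B; split => //; move: B; rewrite E add0n modnMr mul0n add0n.
Qed.

Lemma H0chain u : 0 < u -> u < m -> (u * lam) %% m = 1 ->
  (forall s, s < u -> leads (0, 0) (iter s sigma 0, 0)) /\ leads (0, 0) (tau g, 0).
Proof.
move=> u0 um hu.
have E s : iter s sigma 0 = ((0 + s * lam) %% m) * g + 0.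
  by have := sigma_iter s (Q := 0) (r := 0) (ltnW Hm) (ltnW Hg); rewrite mul0n add0n.
have [] := hit (b := 0) (H := u) u0.
- move=> s s0 su; rewrite E.
  have n0 : (0 + s * lam) %% m != 0.
    apply/eqP => e; have := tr_inj (q := 0) co_lam (ltn_trans su um) (ltnW Hm) (s2 := 0).
    by rewrite mul0n addn0 mod0n => /(_ e) ?; subst s.
  have n1 : (0 + s * lam) %% m != 1.
    apply/eqP => e; have := tr_inj (q := 0) co_lam (ltn_trans su um) um (s2 := u).
    by rewrite add0n hu e => /(_ erefl) ?; subst s; rewrite ltnn in su.
  move: n0 n1; generalize ((0 + s * lam) %% m) => x; case: x => // [[|x]] // _ _; nia.
- by rewrite E add0n hu mul1n addn0 leqnn.
by move=> A B; split => //; move: B; rewrite E add0n hu mul1n addn0.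
Qed.

Lemma Hgchain u : 0 < u -> u < m -> (u * lam) %% m = 1 ->
  (forall s, s < m - u -> leads (g, 0) (iter s sigma g, 0)) /\ leads (g, 0) (tau 0, 0).
Proof.
move=> u0 um hu.
have E s : iter s sigma g = ((1 + s * lam) %% m) * g + 0.
  by have := sigma_iter s (Q := 1) (r := 0) Hm (ltnW Hg); rewrite mul1n addn0.
have Z : (1 + (m - u) * lam) %% m = 0.
  by rewrite -{1}hu modnDml -mulnDl subnKC ?(ltnW um) // modnMr.
have [] := hit (b := g) (H := m - u) _.
- by rewrite subn_gt0.
- move=> s s0 su; rewrite E.
  have sm : s < m by apply: leq_trans su (leq_subr _ _).
  have n0 : (1 + s * lam) %% m != 0.
    have mu' : m - u < m by lia.
    apply/eqP => e; have := tr_inj (q := 1) co_lam sm mu' (s2 := m - u).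
    by rewrite Z e => /(_ erefl) ?; subst s; rewrite ltnn in su.
  have n1 : (1 + s * lam) %% m != 1.
    apply/eqP => e; have := tr_inj (q := 1) co_lam sm (ltnW Hm) (s2 := 0).
    by rewrite mul0n addn0 e modn_small // => /(_ erefl) ?; subst s.
  move: n0 n1; generalize ((1 + s * lam) %% m) => x; case: x => // [[|x]] // _ _; nia.
- by rewrite E Z mul0n.
by move=> A B; split => //; move: B; rewrite E Z mul0n.
Qed.

Definition w := g.+1./2.
Definition mu := l./2 * g.

Lemma Ew : g.+1 = w * 2.
Proof. by rewrite /w muln2 -[LHS]odd_double_half /= Hgo. Qed.

Lemma El : l * g = mu * 2.
Proof.
rewrite /mu mulnAC muln2 -[in LHS](odd_double_half l).
by rewrite (negbTE Hle) add0n.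
Qed.

Lemma w0 : 0 < w. Proof. have := Ew; lia. Qed.

Lemma co_mu : coprime w mu.
Proof.
rewrite /mu coprimeMr; apply/andP; split.
  have := Hgl; rewrite Ew -[in gcdn _ l](odd_double_half l) (negbTE Hle) add0n.
  by rewrite -muln2 -muln_gcdl /coprime => /eqP H; apply/eqP; lia.
rewrite /coprime; set d := gcdn w g.
have h1 : d %| w := dvdn_gcdl _ _.
have h2 : d %| g := dvdn_gcdr _ _.
have h3 : d %| g.+1 by rewrite Ew dvdn_mulr.
have := dvdn_sub h3 h2; rewrite subSnn dvdn1 //.
Qed.

Lemma tau_xe x e : e < 2 -> tau (x * 2 + e) = ((x + mu) %% w) * 2 + e.
Proof.
move=> he; rewrite /tau El Ew.
have -> : x * 2 + e + mu * 2 = (x + mu) * 2 + e by rewrite mulnDl; lia.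
exact: modMD.
Qed.

Lemma chain e x0 : e < 2 -> x0 < w -> leads (0, 0) (tau (x0 * 2 + e), 0) ->
  (forall s, 0 < s -> s < w -> 0 < ((x0 + s * mu) %% w) * 2 + e < g) ->
  forall x, x < w -> leads (0, 0) (x * 2 + e, 0).
Proof.
move=> he hx0 base hv.
have C : forall s, 0 < s -> s <= w -> leads (0, 0) (((x0 + s * mu) %% w) * 2 + e, 0).
  elim=> [|s IH] // _ hs.
  case: (posnP s) => [->|s0].
    by move: base; rewrite tau_xe // mul1n.
  apply: leads_trans (IH s0 (ltnW hs)) _.
  have /andP [v0 vg] := hv s s0 hs.
  have [_ ] := Hr v0 vg.
  rewrite tau_xe // modnDml mulSn; congr (leads _ (_ * 2 + e, 0)); congr (_ %% _); lia.
move=> x hx.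
have [s hs es] := tr_surj x0 co_mu hx.
case: (posnP s) => [s0|s0].
  have := C w w0 (leqnn w).
  suff -> : (x0 + w * mu) %% w = x by [].
  by rewrite [w * mu]mulnC addnC modnMDl -es s0 mul0n addn0.
by rewrite -es; apply: C => //; apply: ltnW.
Qed.

Lemma allS b : b <= g -> leads (0, 0) (b, 0).
Proof.
have [u [u0 um hu]] := u_ex.
have [_ H0] := H0chain u0 um hu.
have [_ HG] := Hgchain u0 um hu.
have Eg : g = w.-1 * 2 + 1 by have := Ew; lia.
have odds : forall x, x < w -> leads (0, 0) (x * 2 + 1, 0).
  apply: (chain (x0 := w.-1)) => //.
  - by rewrite prednK ?w0.
  - by rewrite -Eg.
  move=> s s0 sw; apply/andP; split; first by rewrite addn1.
  have nw : (w.-1 + s * mu) %% w != w.-1.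
    apply/eqP => e; have := tr_inj (q := w.-1) co_mu sw w0 (s2 := 0).
    rewrite mul0n addn0 e modn_small ?prednK ?w0 // => /(_ erefl) ?; subst s.
    by rewrite ltnn in s0.
  have := ltn_pmod (w.-1 + s * mu) w0; move: nw.
  generalize ((w.-1 + s * mu) %% w) => y; have := Ew; lia.
have evens : forall x, x < w -> leads (0, 0) (x * 2 + 0, 0).
  apply: (chain (x0 := 0)) => //; first exact: w0.
  - rewrite mul0n add0n; apply: leads_trans HG.
    by have := odds w.-1; rewrite -Eg prednK ?w0 //; apply.
  move=> s s0 sw; rewrite add0n addn0.
  have nw : (s * mu) %% w != 0.
    apply/eqP => e; have := tr_inj (q := 0) co_mu sw w0 (s2 := 0).
    rewrite mul0n add0n e mod0n => /(_ erefl) ?; subst s.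
    by rewrite ltnn in s0.
  have := ltn_pmod (s * mu) w0; move: nw.
  generalize ((s * mu) %% w) => y; have := Ew; lia.
move=> hb.
have hb2 : b./2 < w by have := Ew; have := odd_double_half b; lia.
have := odd_double_half b; rewrite -muln2.
case: (odd b) => /= E.
  by rewrite -E addnC; apply: odds.
by rewrite -E add0n -[b./2 * 2]addn0; apply: evens.
Qed.

Lemma allZ j : j < n -> leads (0, 0) (j, 0).
Proof.
move=> hj.
have [u [u0 um hu]] := u_ex.
have [A0 _] := H0chain u0 um hu.
have [AG _] := Hgchain u0 um hu.
have g0 : 0 < g by lia.
set Q := j %/ g; set r := j %% g.
have hQ : Q < m by rewrite /Q ltn_divLR.
have hr : r < g by rewrite /r ltn_pmod.
have Ej : j = Q * g + r by rewrite /Q /r -divn_eq.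
have [s hs es] := tr_surj 0 co_lam hQ.
case: (posnP r) => r0.
  rewrite Ej r0 addn0.
  case: (ltnP s u) => su.
    have := A0 s su.
    by have := sigma_iter s (Q := 0) (r := 0) (ltnW Hm) g0; rewrite mul0n !addn0 es => ->.
  have su' : s - u < m - u by lia.
  have := AG (s - u) su'.
  have := sigma_iter (s - u) (Q := 1) (r := 0) Hm g0; rewrite mul1n !addn0 => ->.
  have -> : (1 + (s - u) * lam) %% m = Q.
    by rewrite -es -{1}hu modnDml -mulnDl subnKC.
  exact: leads_trans (allS (leqnn g)).
apply: leads_trans (allS (ltnW hr)) _.
have [A _] := Hr r0 hr.
have := A s hs.
have := sigma_iter s (Q := 0) (ltnW Hm) hr; rewrite mul0n add0n es => ->.
by rewrite -Ej.
Qed.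

Lemma allOne a : a <= g -> leads (0, 0) (a, 1).
Proof.
move=> ha.
have E : sigma ((a + l * g) %% n) = a.
  rewrite /sigma modnDml -addnA subnKC; first by rewrite modnDr modn_small //; have := kn; lia.
  by have := kn; lia.
apply: leads_stepr (allZ (j := (a + l * g) %% n) _) _; first by rewrite ltn_pmod ?npos.
rewrite /step /=.
change ((sigma ((a + l * g) %% n), if sigma ((a + l * g) %% n) <= g then 1 else 0) = (a, 1)).
by rewrite E ha.
Qed.

Lemma allN N : 0 < N -> N < k -> forall j, j < n -> leads (0, 0) (j, N).
Proof.
have tail : forall N, N != 0 -> leads (0, 0) (g, N) ->
    forall j, g <= j -> j < n -> leads (0, 0) (j, N).
  move=> N' hN hg j hj1 hj2; apply: leads_trans hg _.
  by have := B4 (d := j - g) hN (leqnn g); rewrite subnKC // => /(_ hj2).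
elim: N => [|N IH] // _ hN.
case: (posnP N) => [->|N0].
  move=> j hj; case: (leqP j g) => hjg; first exact: allOne.
  by apply: tail => //; [exact: allOne | exact: ltnW].
have IH' := IH N0 (ltnW hN).
have nx : nxt N = N.+1 by rewrite /nxt ifN_eq // neq_ltn hN.
have NN : N != 0 by rewrite -lt0n.
have low : forall j, j <= g -> leads (0, 0) (j, N.+1).
  case=> [|j] hj.
    apply: leads_stepr (IH' n.-1 _) _; first by have := npos; lia.
    by rewrite B2 ?nx.
  apply: leads_stepr (IH' j _) _; first by have := kn; lia.
  by rewrite B3 ?nx.
move=> j hj; case: (leqP j g) => hjg; first exact: low.
by apply: tail => //; [exact: low | exact: ltnW].
Qed.

Lemma allR j N : j < n -> N < k -> leads (0, 0) (j, N).
Proof.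
move=> hj hN; case: (posnP N) => [->|N0]; first exact: allZ.
exact: allN.
Qed.

Lemma nxt_lt N : N < k -> nxt N < k.
Proof. rewrite /nxt; case: eqP; lia. Qed.

Lemma step_range j N : j < n -> N < k -> (step (j, N)).1 < n /\ (step (j, N)).2 < k.
Proof.
move=> hj hN; rewrite /step; case: eqP => _ /=; split; rewrite ?ltn_pmod ?npos //.
- by case: ifP => _; have := gk; lia.
- by case: ifP => // _; apply: nxt_lt.
Qed.

Lemma step_inj j1 N1 j2 N2 : j1 < n -> N1 < k -> j2 < n -> N2 < k ->
  step (j1, N1) = step (j2, N2) -> (j1, N1) = (j2, N2).
Proof.
move=> h1 h2 h3 h4; rewrite /step.
case: (eqVneq N1 0) => [->|n1]; case: (eqVneq N2 0) => [->|n2] /=.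
- case=> /eqP e _; congr (_, _); move: e; rewrite eqn_modDr !modn_small //; by move/eqP.
- case=> e; rewrite e; case: ifP => _; last by move=> e2; rewrite -e2 eqxx in n2.
  by rewrite /nxt; case: eqP => //; case: N2 n2 {h4 e} => [|[|]] //.
- case=> e; rewrite e; case: ifP => _; last by move=> e2; rewrite e2 eqxx in n1.
  by rewrite /nxt; case: eqP => //; case: N1 n1 {h2 e} => [|[|]] //.
- case=> /eqP e.
  have ej : j1 = j2.
    by move: e; rewrite -[j1.+1]addn1 -[j2.+1]addn1 eqn_modDr !modn_small // => /eqP.
  subst j2; case: ifP => _; last by move=> ->.
  rewrite /nxt; case: eqP; case: eqP => a b c; congr (_, _); lia.
Qed.

Definition ordn x : 'I_n := Ordinal (ltn_pmod x npos).
Definition cd j d : 'I_n * 'I_n := (ordn (j + d), ordn j).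
Definition dN N := if N == 0 then 0 else if N * 2 < k then k - N * 2 else k * 2 - N * 2.
Definition cellj (p : nat * nat) := cd p.1 (dN p.2).
Definition FF := cyc_kdiag n k.
Definition RR : 'I_n -> int := fun _ => 1%R.
Definition CC : 'I_n -> int := fun j => if (j : nat) <= g then (-1)%R else 1%R.

Lemma Dmod X Y e : X %% n = (Y + e) %% n -> ((X %% n) + n - (Y %% n)) %% n = e %% n.
Proof.
move=> ->; have rn := ltn_pmod Y npos.
rewrite -addnBA ?(ltnW rn) // modnDml {1}(divn_eq Y n).
set q := Y %/ n; set r := Y %% n.
have -> : q * n + r + e + (n - r) = (q + 1) * n + e by rewrite mulnDl mul1n; lia.
by rewrite modnMDl.
Qed.

Lemma cd_in j d : (cd j d \in FF) = (d %% n < k).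
Proof. by rewrite inE /= (Dmod (e := d)). Qed.

Lemma cd_eq j1 d1 j2 d2 : (j1 + d1) %% n = (j2 + d2) %% n -> j1 %% n = j2 %% n ->
  cd j1 d1 = cd j2 d2.
Proof. by move=> e1 e2; congr (_, _); apply: val_inj. Qed.

Lemma cd_mod j d : cd (j %% n) d = cd j d.
Proof. by apply: cd_eq; rewrite ?modnDml ?modn_mod. Qed.

Lemma modDn x : x < n -> (x + n) %% n = x.
Proof. by move=> h; rewrite modnDr modn_small. Qed.

Lemma row_mv j d t : t <= d + n ->
  ((cd j d).1, addmod (cd j d).2 t) = cd (j + t) (d + n - t).
Proof.
move=> h; congr (_, _); apply: val_inj => /=; last by rewrite modnDml.
by rewrite (_ : j + t + (d + n - t) = (j + d) + n) ?modnDr //; lia.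
Qed.

Lemma colp_mv j d t : (addmod (cd j d).1 t, (cd j d).2) = cd j (d + t).
Proof. by congr (_, _); apply: val_inj => /=; rewrite modnDml addnA. Qed.

Lemma colm_mv j d t : t <= n -> (submod (cd j d).1 t, (cd j d).2) = cd j (d + n - t).
Proof.
move=> h; congr (_, _); apply: val_inj => /=; rewrite modnDml.
case: (ltngtP t n) h => // [tn|->] _.
  by rewrite (modn_small tn) (_ : j + d + (n - t) = j + (d + n - t)) //; lia.
by rewrite modnn subn0 addnK modnDr.
Qed.

Lemma ff_at (mv : nat -> 'I_n * 'I_n) x t : t < n -> mv t.+1 \in FF ->
  (forall s, s < t -> mv s.+1 \notin FF) -> first_filled FF mv x = mv t.+1.
Proof.
move=> tn h1 h2; rewrite /first_filled.
by rewrite (ff_gen (P := fun t => mv t.+1 \in FF) tn h1 h2) tn.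
Qed.

Lemma sR_pos j d : 0 < d -> d < k -> sR FF (cd j d) = cd j.+1 d.-1.
Proof.
move=> d0 dk; have := kn => kn'.
rewrite /sR (ff_at _ (t := 0)); cbv beta.
- rewrite row_mv; last lia.
  apply: cd_eq; last by rewrite addn1.
  by rewrite (_ : j + 1 + (d + n - 1) = (j.+1 + d.-1) + n) ?modnDr //; lia.
- lia.
- rewrite row_mv ?cd_in; last lia.
  by rewrite (_ : d + n - 1 = d.-1 + n) ?modDn; lia.
- by move=> s; rewrite ltn0.
Qed.

Lemma sR_0 j : sR FF (cd j 0) = cd (j + (n - k).+1) k.-1.
Proof.
have := kn => kn'; have := gk => gk'.
rewrite /sR (ff_at _ (t := n - k)); cbv beta.
- rewrite row_mv; last lia.
  by apply: cd_eq => //; rewrite (_ : 0 + n - (n - k).+1 = k.-1) //; lia.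
- lia.
- rewrite row_mv ?cd_in; last lia.
  by rewrite modn_small; lia.
- move=> s hs; rewrite row_mv ?cd_in; last lia.
  by rewrite modn_small; lia.
Qed.

Lemma sC_lt j d : d.+1 < k -> sC FF (cd j d) = cd j d.+1.
Proof.
move=> dk; have := kn => kn'.
rewrite /sC (ff_at _ (t := 0)); cbv beta.
- by rewrite colp_mv addn1.
- lia.
- by rewrite colp_mv cd_in modn_small; lia.
- by move=> s; rewrite ltn0.
Qed.

Lemma sC_last j : sC FF (cd j k.-1) = cd j 0.
Proof.
have := kn => kn'; have := gk => gk'.
rewrite /sC (ff_at _ (t := n - k)); cbv beta.
- rewrite colp_mv; apply: cd_eq => //.
  by rewrite (_ : j + (k.-1 + (n - k).+1) = j + n) ?modnDr ?addn0 //; lia.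
- lia.
- rewrite colp_mv ?cd_in.
  by rewrite (_ : k.-1 + (n - k).+1 = n) ?modnn //; lia.
- move=> s hs; rewrite colp_mv ?cd_in.
  by rewrite modn_small; lia.
Qed.

Lemma sCi_pos j d : 0 < d -> d < k -> sCinv FF (cd j d) = cd j d.-1.
Proof.
move=> d0 dk; have := kn => kn'.
rewrite /sCinv (ff_at _ (t := 0)); cbv beta.
- rewrite colm_mv; last lia.
  by apply: cd_eq => //; rewrite (_ : j + (d + n - 1) = (j + d.-1) + n) ?modnDr //; lia.
- lia.
- rewrite colm_mv ?cd_in; last lia.
  by rewrite (_ : d + n - 1 = d.-1 + n) ?modDn; lia.
- by move=> s; rewrite ltn0.
Qed.

Lemma sCi_0 j : sCinv FF (cd j 0) = cd j k.-1.
Proof.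
have := kn => kn'; have := gk => gk'.
rewrite /sCinv (ff_at _ (t := n - k)); cbv beta.
- rewrite colm_mv; last lia.
  by apply: cd_eq => //; rewrite (_ : 0 + n - (n - k).+1 = k.-1) //; lia.
- lia.
- rewrite colm_mv ?cd_in; last lia.
  by rewrite modn_small; lia.
- move=> s hs; rewrite colm_mv ?cd_in; last lia.
  by rewrite modn_small; lia.
Qed.

Lemma Ek : k = 1 + mu * 2. Proof. by rewrite El. Qed.

Lemma dN_lt N : N < k -> dN N < k.
Proof.
move=> hN; have Ek' := Ek; have gk' := gk; clear Hg Hm Hl Hgo Hmo Hle Hlm Hgl Hml; move: Ek'; generalize mu => p Ek'; rewrite /dN.
case: eqP => eN; first lia.
case: (ltnP (N * 2) k) => ?; lia.
Qed.

Lemma dN_pos N : 0 < N -> N < k -> 0 < dN N.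
Proof.
move=> h0 hN; have Ek' := Ek; have gk' := gk; clear Hg Hm Hl Hgo Hmo Hle Hlm Hgl Hml; move: Ek'; generalize mu => p Ek'; rewrite /dN.
case: eqP => eN; first lia.
case: (ltnP (N * 2) k) => ?; lia.
Qed.

Lemma dN1 : dN 1 = k.-2.
Proof.
have Ek' := Ek; have gk' := gk; clear Hg Hm Hl Hgo Hmo Hle Hlm Hgl Hml; move: Ek'; generalize mu => p Ek'; rewrite /dN.
have -> : (1 == 0) = false by [].
case: (ltnP (1 * 2) k) => ?; lia.
Qed.

Lemma dN_step N : 0 < N -> N < k -> 1 < dN N -> dN (nxt N) = (dN N).-2.
Proof.
move=> h0 hN; have Ek' := Ek; have gk' := gk; clear Hg Hm Hl Hgo Hmo Hle Hlm Hgl Hml.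
move: Ek'; generalize mu => p Ek'.
have N0 : (N == 0) = false by apply/eqP; lia.
rewrite /nxt; case: (eqVneq N.+1 k) => [e|ne].
  have -> : dN 0 = 0 by []. rewrite /dN N0.
  by case: (ltnP (N * 2) k) => ?; lia.
rewrite /dN N0 /=.
by case: (ltnP (N * 2) k) => ?; case: (ltnP (N.+1 * 2) k) => ?; lia.
Qed.

Lemma dN_one N : 0 < N -> N < k -> dN N = 1 -> nxt N = N.+1 /\ dN N.+1 = k.-1.
Proof.
move=> h0 hN; have Ek' := Ek; have gk' := gk; clear Hg Hm Hl Hgo Hmo Hle Hlm Hgl Hml.
move: Ek'; generalize mu => p Ek'.
have N0 : (N == 0) = false by apply/eqP; lia.
rewrite {1}/dN N0 => h1.
have ne : N.+1 == k = false.
  by apply/eqP; move: h1; case: (ltnP (N * 2) k) => ?; lia.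
rewrite /nxt ne; split => //.
rewrite /dN /=.
by move: h1; case: (ltnP (N * 2) k) => ?; case: (ltnP (N.+1 * 2) k) => ?; lia.
Qed.

Lemma dN_inj N1 N2 : N1 < k -> N2 < k -> dN N1 = dN N2 -> N1 = N2.
Proof.
move=> h1 h2; have Ek' := Ek; have gk' := gk; clear Hg Hm Hl Hgo Hmo Hle Hlm Hgl Hml; move: Ek'; generalize mu => p Ek'; rewrite /dN.
case: (eqVneq N1 0) => [e1|_]; case: (eqVneq N2 0) => [e2|_];
  case: (ltnP (N1 * 2) k) => ?; case: (ltnP (N2 * 2) k) => ?; lia.
Qed.

Lemma dN_surj d : d < k -> exists2 N, N < k & dN N = d.
Proof.
move=> dk; have Ek' := Ek; have gk' := gk.
have := odd_double_half d; rewrite -muln2; set h := d./2.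
case: (odd d) => /= E.
  exists (mu - h); first lia.
  rewrite /dN; case: eqP => eN; first lia.
  case: (ltnP ((mu - h) * 2) k) => ?; lia.
case: (posnP d) => [->|d0]; first by exists 0.
exists (k - h); first lia.
rewrite /dN; case: eqP => eN; first lia.
case: (ltnP ((k - h) * 2) k) => ?; lia.
Qed.

Lemma CN_eq x : CN FF RR CC x =
  if ((sR FF x).2 : nat) <= g then sCinv FF (sR FF x) else sC FF (sR FF x).
Proof.
have m1 : (@eq_op int (-1)%R 1%R) = false by [].
rewrite /CN /RR /sRpow eqxx /CC /sCpow.
by case: (nat_of_ord (sR FF x).2 <= g); rewrite ?m1 eqxx.
Qed.

Lemma CN_cd j N : j < n -> N < k -> CN FF RR CC (cellj (j, N)) = cellj (step (j, N)).
Proof.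
move=> hj hN; have kn' := kn; have gk' := gk.
rewrite CN_eq.
have -> : cellj (j, N) = cd j (dN N) by [].
case: (eqVneq N 0) => [->|N0].
  have -> : dN 0 = 0 by [].
  rewrite sR_0.
  have E1 : (n - k).+1 = n - l * g by lia.
  rewrite E1.
  have -> : ((cd (j + (n - l * g)) k.-1).2 : nat) = (j + (n - l * g)) %% n by [].
  rewrite /step eqxx.
  case: ifP => hg.
    rewrite sCi_pos; try lia.
    by rewrite /cellj /= dN1 cd_mod.
  by rewrite sC_last /cellj /= cd_mod.
have N0' : 0 < N by rewrite lt0n.
have d0 := dN_pos N0' hN.
have dk := dN_lt hN.
rewrite sR_pos //.
have -> : ((cd j.+1 (dN N).-1).2 : nat) = j.+1 %% n by [].
rewrite /step (negbTE N0).
case: ifP => hg.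
  case: (ltnP 1 (dN N)) => d1.
    rewrite sCi_pos; try lia.
    by rewrite /cellj /= dN_step // cd_mod.
  have e1 : dN N = 1 by lia.
  have [-> e2] := dN_one N0' hN e1.
  by rewrite e1 /= sCi_0 /cellj /= e2 cd_mod.
rewrite sC_lt ?prednK // /cellj /= cd_mod //.
Qed.

Lemma cellj_F j N : N < k -> cellj (j, N) \in FF.
Proof.
move=> hN; rewrite /cellj cd_in /= modn_small; first exact: dN_lt.
by apply: ltn_trans (dN_lt hN) kn.
Qed.

Lemma F_cellj x : x \in FF -> exists2 N, N < k & x = cellj ((x.2 : nat), N).
Proof.
rewrite inE => hx.
have [N hN e] := dN_surj hx.
exists N => //; rewrite /cellj /= e.
case: x {hx e} => a b; congr (_, _); apply: val_inj => /=; last by rewrite modn_small.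
rewrite modnDmr (_ : b + (a + n - b) = a + n); first by rewrite modDn.
have := ltn_ord b; lia.
Qed.

Lemma cellj_inj j1 N1 j2 N2 : j1 < n -> N1 < k -> j2 < n -> N2 < k ->
  cellj (j1, N1) = cellj (j2, N2) -> (j1, N1) = (j2, N2).
Proof.
move=> h1 h2 h3 h4 e.
have ej : j1 = j2.
  by have := congr1 (fun x => nat_of_ord x.2) e; rewrite /= !modn_small.
subst j2; congr (_, _); apply: dN_inj => //.
have := congr1 (fun x : 'I_n * 'I_n => (x.1 + n - x.2) %% n) e.
rewrite /cellj /= !(Dmod (e := _) (erefl _)) !modn_small //.
- by apply: ltn_trans (dN_lt h4) kn.
- by apply: ltn_trans (dN_lt h2) kn.
Qed.

Lemma iter_cellj t : iter t (CN FF RR CC) (cellj (0, 0)) = cellj (iter t step (0, 0)) /\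
  (iter t step (0, 0)).1 < n /\ (iter t step (0, 0)).2 < k.
Proof.
elim: t => [|t [IH [r1 r2]]] /=; first by split => //; split; [exact: npos | have := gk; lia].
move: IH r1 r2; case: (iter t step (0, 0)) => j N /= IH r1 r2.
by rewrite IH CN_cd //; split => //; apply: step_range.
Qed.

Lemma main_sec : exists R C : 'I_n -> int, is_solution FF R C.
Proof.
exists RR, CC; split; first by move=> i; left.
split; first by move=> j; rewrite /CC; case: ifP; [right | left].
split.
  move=> x /F_cellj [N hN ->]; rewrite CN_cd //.
  have [r1 r2] := step_range (ltn_ord x.2) hN.
  by case: (step _) r1 r2 => a b /= _ r2; apply: cellj_F.
split.
  move=> x y /F_cellj [N1 h1 ->] /F_cellj [N2 h2 ->].
  rewrite !CN_cd //.
  have [r1 r2] := step_range (ltn_ord x.2) h1.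
  have [r3 r4] := step_range (ltn_ord y.2) h2.
  move: r1 r2 r3 r4; case E1 : (step (_, N1)) => [a1 b1]; case E2 : (step (_, N2)) => [a2 b2] /= r1 r2 r3 r4.
  move=> /(cellj_inj r1 r2 r3 r4) e; move: E1 E2; rewrite e => <-.
  by move/step_inj => -> //.
exists (cellj (0, 0)); first by apply: cellj_F; have := gk; lia.
move=> y /F_cellj [N hN ->].
have [t ht] := allR (ltn_ord y.2) hN.
exists t; have [-> _] := iter_cellj t; by rewrite ht.
Qed.

End Abs.

Theorem corollary5p3 (g m l : nat) (F : {set 'I_(m * g) * 'I_(m * g)}) :
  1 < g -> 1 < m -> 1 < l ->
  odd g -> odd m -> ~~ odd l -> l < m ->
  gcdn g.+1 l = 2 -> gcdn m l = 1 ->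
  F = cyc_kdiag (m * g) (1 + l * g) ->
  exists R C : 'I_(m * g) -> int, is_solution F R C.
Proof.
move=> h1 h2 h3 h4 h5 h6 h7 h8 h9 ->.
exact: (main_sec h1 h2 h3 h4 h5 h6 h7 h8 h9).
Qed.
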